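(* Let $n\ge 2$ and let $C$ be a self-locating-dominating code in $P_n\square P_2$. Then $(v_1,1),(v_1,2),(v_n,1),(v_n,2)\in C$ and $|C|\ge n+1$.
   Context: $P_n$ is the path with vertex set $\{v_1,\dots,v_n\}$ and edges $v_iv_{i+1}$ ($1\le i\le n-1$); $P_2$ is the path on vertex set $\{1,2\}$. The Cartesian product $G\square H$ has vertex set $V(G)\times V(H)$, with $(u,v)$ adjacent to $(u',v')$ iff either $u=u'$ and $vv'\in E(H)$, or $uu'\in E(G)$ and $v=v'$. For a vertex $u$, $N[u]$ is its closed neighbourhood. A code is a non-empty subset $C$ of the vertex set $V$; $I(C;u)=N[u]\cap C$. A code $C$ is self-locating-dominating if for every $u\in V\setminus C$ we have $I(C;u)\neq\emptyset$ and $\bigcap_{c\in I(C;u)}N[c]=\{u\}$. *)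

(* Defs.v *)
From mathcomp Require Import all_boot.
Set Implicit Arguments. Unset Strict Implicit. Unset Printing Implicit Defensive.

(* Path P_n on 'I_n: vertex v_{i+1} is the ordinal i; edges i ~ i+1. *)
Definition path_adj (n : nat) (a b : 'I_n) : bool :=
  (val a == (val b).+1) || (val b == (val a).+1).

(* Vertex type of P_n \square P_2: pairs (i, j) with i : 'I_n, j : 'I_2
   (j = 0 represents vertex 1 of P_2, j = 1 represents vertex 2). *)
Definition vtx (n : nat) := ('I_n * 'I_2)%type.

Definition box_adj (n : nat) (u v : vtx n) : bool :=
  ((u.1 == v.1) && path_adj u.2 v.2) || (path_adj u.1 v.1 && (u.2 == v.2)).

Definition cnbhd (n : nat) (u : vtx n) : {set vtx n} :=
  [set v | (v == u) || box_adj u v].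

Definition Iset (n : nat) (C : {set vtx n}) (u : vtx n) : {set vtx n} :=
  cnbhd u :&: C.

Definition self_locating_dominating (n : nat) (C : {set vtx n}) : Prop :=
  C != set0 /\
  forall u : vtx n, u \notin C ->
    Iset C u != set0 /\ \bigcap_(c in Iset C u) cnbhd c = [set u].

(* Main.v *)
Require Import Defs.
From mathcomp Require Import all_boot zify.
Set Warnings "-notation-overridden".

Lemma inN n (u v : vtx n) : (v \in cnbhd u) =
  ((val v.1 == val u.1) || ((val v.2 == val u.2) && ((val v.1 == (val u.1).+1) || (val u.1 == (val v.1).+1)))).
Proof.
case: u v => [[a ha] [b hb]] [[c hc] [d hd]].
rewrite inE /box_adj /path_adj /= -!val_eqE /= xpair_eqE -!val_eqE /=.
case: b hb => [|[|b]] // _; case: d hd => [|[|d]] // _;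
case: (c =P a) => [->|ne] //=; rewrite ?orbT ?andbT ?andbF ?orbF //;
 first [by rewrite /= orbC | by rewrite eqxx | by apply/eqP=> E; apply: ne; rewrite E].
Qed.

Lemma inNP n (u v : vtx n) : v \in cnbhd u ->
  (val v.1 = val u.1) \/ ((val v.2 = val u.2) /\ ((val v.1 = (val u.1).+1) \/ (val u.1 = (val v.1).+1))).
Proof. by rewrite inN => /orP[/eqP|/andP[/eqP ? /orP[/eqP|/eqP]]]; auto. Qed.
Lemma inNP' n (u v : vtx n) :
  (val v.1 = val u.1) \/ ((val v.2 = val u.2) /\ ((val v.1 = (val u.1).+1) \/ (val u.1 = (val v.1).+1))) -> v \in cnbhd u.
Proof. by rewrite inN => [[/eqP->|[/eqP-> [/eqP->|/eqP->]]]]; rewrite ?orbT. Qed.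
Lemma neqP n (u v : vtx n) : u != v -> val u.1 <> val v.1 \/ val u.2 <> val v.2.
Proof.
case: u v => [a b] [c d]; rewrite xpair_eqE negb_and -!val_eqE.
by case/orP => /eqP; auto.
Qed.

Lemma keyR n (C : {set vtx n}) (hC : self_locating_dominating C) (i : 'I_n) (j : 'I_2) :
  (i, j) \notin C -> exists k : 'I_n, (val k == (val i).+1) && ((k, j) \in C).
Proof.
case: n C hC i => [|m] C hC i; first by case: i.
move=> uC; case: (boolP [exists k : 'I_m.+1, (val k == (val i).+1) && ((k, j) \in C)]) => [/existsP //|/existsPn H]; exfalso.
have H' : forall c, c \in C -> c \in cnbhd (i, j) -> val c.1 <= val i.
  move=> [k l] cC /inNP /= cN; move: (H k).
  rewrite negb_and; case/orP=> [/eqP ne|]; first by move: cN; case: k cC ne=> k hk /= _ ne; lia.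
  have [e|] := eqVneq l j; first by rewrite -e cC.
  rewrite -val_eqE => /eqP ne _; move: cN ne; case: k l {cC} => k hk [l hl] /=; lia.
case: (hC) => _ /(_ _ uC) [_ Hcap].
pose w : vtx m.+1 := (inord (val i).-1, inord (1 - val j)).
have w1 : val w.1 = (val i).-1 by rewrite /= inordK //; case: i {H H' uC Hcap w} => i hi /=; lia.
have w2 : val w.2 = 1 - val j by rewrite /= inordK //; case: j {H H' uC Hcap w w1} => j hj /=; lia.
have : w \in \bigcap_(c in Iset C (i, j)) cnbhd c.
  apply/bigcapP => c; rewrite /Iset inE => /andP[cN cC].
  have cle := H' c cC cN.
  have cne : c != (i, j) by apply: contraNneq uC => <-.
  apply: inNP'; move/inNP: cN; move/neqP: cne; move: cle; rewrite w1 w2 /=.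
  case: c {cC} => [[k hk] [l hl]] /=.
  case: i {H H' uC Hcap w w1 w2} => i hi /=; case: j => j hj /=; lia.
rewrite Hcap inE => /eqP/(congr1 (fun x => val x.2)); rewrite w2 /=; case: j {H H' uC Hcap w w1 w2} => j hj /=; lia.
Qed.

Lemma keyL n (C : {set vtx n}) (hC : self_locating_dominating C) (i : 'I_n) (j : 'I_2) :
  (i, j) \notin C -> exists k : 'I_n, ((val k).+1 == val i) && ((k, j) \in C).
Proof.
case: n C hC i => [|m] C hC i; first by case: i.
move=> uC; case: (boolP [exists k : 'I_m.+1, ((val k).+1 == val i) && ((k, j) \in C)]) => [/existsP //|/existsPn H]; exfalso.
have H' : forall c, c \in C -> c \in cnbhd (i, j) -> val i <= val c.1.
  move=> [k l] cC /inNP /= cN; move: (H k).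
  rewrite negb_and; case/orP=> [/eqP ne|]; first by move: cN; case: k cC ne=> k hk /= _ ne; lia.
  have [e|] := eqVneq l j; first by rewrite -e cC.
  rewrite -val_eqE => /eqP ne _; move: cN ne; case: k l {cC} => k hk [l hl] /=; lia.
case: (hC) => _ /(_ _ uC) [_ Hcap].
pose w : vtx m.+1 := (inord (minn (val i).+1 m), inord (1 - val j)).
have w1 : val w.1 = minn (val i).+1 m by rewrite /= inordK //; case: i {H H' uC Hcap w} => i hi /=; lia.
have w2 : val w.2 = 1 - val j by rewrite /= inordK //; case: j {H H' uC Hcap w w1} => j hj /=; lia.
have : w \in \bigcap_(c in Iset C (i, j)) cnbhd c.
  apply/bigcapP => c; rewrite /Iset inE => /andP[cN cC].
  have cle := H' c cC cN.
  have cne : c != (i, j) by apply: contraNneq uC => <-.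
  apply: inNP'; move/inNP: cN; move/neqP: cne; move: cle; rewrite w1 w2 /=.
  case: c {cC} => [[k hk] [l hl]] /=.
  case: i {H H' uC Hcap w w1 w2} => i hi /=; case: j => j hj /=; lia.
rewrite Hcap inE => /eqP/(congr1 (fun x => val x.2)); rewrite w2 /=; case: j {H H' uC Hcap w w1 w2} => j hj /=; lia.
Qed.

Lemma sumlem (f : nat -> nat) m : f 0 = 1 -> f m = 1 ->
  (forall i, i < m -> 1 <= f i + f i.+1) -> m.+2 <= 2 * \sum_(0 <= i < m.+1) f i.
Proof.
move=> f0 fm fs.
have: forall k, k <= m -> k.+1 + f k <= 2 * \sum_(0 <= i < k.+1) f i.
  elim=> [|k IH] hk; first by rewrite big_nat1 f0.
  rewrite big_nat_recr //=; have := IH (ltnW hk); have := fs k hk; lia.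
move/(_ m (leqnn m)); rewrite fm; lia.
Qed.

Theorem mainTheorem16 (n : nat) (hn : 2 <= n) (C : {set vtx n}) :
  self_locating_dominating C ->
  (forall (i : 'I_n) (j : 'I_2),
     (val i == 0) || (val i == n.-1) -> (i, j) \in C) /\
  n.+1 <= #|C|.
Proof.
move=> hC.
have P1 : forall (i : 'I_n) (j : 'I_2), (val i == 0) || (val i == n.-1) -> (i, j) \in C.
  move=> i j hi; apply/negPn/negP => ijC.
  have [k /andP[/eqP k1 _]] := @keyL _ C hC _ _ ijC.
  have [k' /andP[/eqP k2 _]] := @keyR _ C hC _ _ ijC.
  move: hi; case: i k1 k2 {ijC} => i hi /=; case: k => k hk; case: k' => k' hk' /= k1 k2; lia.
split=> //.
case: n hn C hC P1 => [//|m] hm C hC P1.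
pose a (j : 'I_2) (k : nat) := (((inord k : 'I_m.+1), j) \in C : nat).
have E : #|C| = \sum_(0 <= k < m.+1) (a ord0 k + a ord_max k).
  rewrite big_mkord; transitivity (\sum_(i < m.+1) \sum_(j < 2) ((i, j) \in C : nat)).
    rewrite pair_big /= -sum1_card big_mkcond /=; apply: eq_bigr => -[i j] _.
    by case: (_ \in C).
  apply: eq_bigr => i _; rewrite big_ord_recl big_ord1 /a inord_val.
  by have -> : lift ord0 ord0 = ord_max :> 'I_2 by apply: val_inj.
have H : forall j : 'I_2, m.+2 <= 2 * \sum_(0 <= k < m.+1) a j k.
  move=> j; apply: sumlem.
  - by rewrite /a P1 //= inordK ?eqxx ?orbT.
  - by rewrite /a P1 //= inordK ?eqxx ?orbT.
  move=> i0 hi; rewrite /a; case: (boolP ((inord i0, j) \in C)) => // ijC.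
  have [k /andP[/eqP k1 kC]] := @keyR _ C hC _ _ ijC.
  have -> : (inord i0.+1 : 'I_m.+1) = k.
    have k1' : nat_of_ord k = (nat_of_ord (inord i0 : 'I_m.+1)).+1 := k1.
    apply: val_inj; rewrite /= k1' !inordK //; lia.
  by rewrite kC.
rewrite E big_split /=; have := H ord0; have := H ord_max; lia.
Qed.
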